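(* Let $(W,S)$ be a Coxeter system with $S$ finite, $\phi:\operatorname{Ad}(Q_W)\to W$ the homomorphism $e_x\mapsto x$, and $C_W=\ker\phi$. If $x,y\in Q_W$ are conjugate in $W$, then $e_x^2=e_y^2$, and this element lies in $C_W$.
   Context: A Coxeter system $(W,S)$: $S$ finite, $m:S\times S\to\mathbb{N}\cup\{\infty\}$ with $m(s,s)=1$, $2\le m(s,t)=m(t,s)\le\infty$ for $s\ne t$, $W=\langle s\in S\mid (st)^{m(s,t)}=1\ (m(s,t)<\infty)\rangle$. The Coxeter quandle is $Q_W=\bigcup_{w\in W}w^{-1}Sw$ with $x\ast y=yxy$, and $\operatorname{Ad}(Q_W)=\langle e_x\ (x\in Q_W)\mid e_y^{-1}e_xe_y=e_{x\ast y}\rangle$. *)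

(* Defs.v *)
From mathcomp Require Import all_boot.
Set Implicit Arguments. Unset Strict Implicit. Unset Printing Implicit Defensive.


(* Groups given by presentations, modelled concretely: an element of the group
   <X | R> is a word over X^{+-1}; two words denote the same element iff they are
   related by the congruence generated by free cancellation and the relations. *)
Definition word (X : Type) := seq (X * bool). (* (x,false) = x, (x,true) = x^-1 *)

Definition winv (X : Type) (w : word X) : word X :=
  rev (map (fun p => (p.1, ~~ p.2)) w).

Inductive pres_eq (X : Type) (R : word X -> word X -> Prop) : word X -> word X -> Prop :=
| pe_refl w : pres_eq R w w
| pe_sym u v : pres_eq R u v -> pres_eq R v u
| pe_trans u v w : pres_eq R u v -> pres_eq R v w -> pres_eq R u w
| pe_cat u u' v v' : pres_eq R u u' -> pres_eq R v v' -> pres_eq R (u ++ v) (u' ++ v')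
| pe_cancel x b : pres_eq R [:: (x, b); (x, ~~ b)] [::]
| pe_rel u v : R u v -> pres_eq R u v.

(* Coxeter matrix: None stands for infinity. *)
Definition is_coxeter_matrix (S : Type) (m : S -> S -> option nat) : Prop :=
  (forall s, m s s = Some 1%N) /\ (forall s t, m s t = m t s) /\
  (forall s t k, s <> t -> m s t = Some k -> (2 <= k)%N).

Definition gen (X : Type) (x : X) : word X := [:: (x, false)].

Definition wpow (X : Type) (w : word X) (k : nat) : word X := flatten (nseq k w).

Definition coxeter_rel (S : Type) (m : S -> S -> option nat) (u v : word S) : Prop :=
  exists s t k, m s t = Some k /\ u = wpow (gen s ++ gen t) k /\ v = [::].

Definition W_eq (S : Type) (m : S -> S -> option nat) := pres_eq (@coxeter_rel S m).

Definition inQ (S : Type) (m : S -> S -> option nat) (w : word S) : Prop :=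
  exists s u, W_eq m w (winv u ++ gen s ++ u).

Definition QW (S : Type) (m : S -> S -> option nat) := {w : word S | inQ m w}.

(* Relations of Ad(Q_W): generators e_x indexed by elements of Q_W (words
   representing the same element of W give the same generator), and
   e_y^-1 e_x e_y = e_{x*y} with x*y = y x y. *)
Definition ad_rel (S : Type) (m : S -> S -> option nat) (a b : word (QW m)) : Prop :=
  (exists x y : QW m, W_eq m (proj1_sig x) (proj1_sig y) /\
      a = gen x /\ b = gen y) \/
  (exists x y z : QW m,
      W_eq m (proj1_sig z) (proj1_sig y ++ proj1_sig x ++ proj1_sig y) /\
      a = [:: (y, true); (x, false); (y, false)] /\ b = gen z).

Definition Ad_eq (S : Type) (m : S -> S -> option nat) := pres_eq (@ad_rel S m).

Definition phi (S : Type) (m : S -> S -> option nat) (a : word (QW m)) : word S :=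
  flatten (map (fun p : QW m * bool => if p.2 then winv (proj1_sig p.1) else proj1_sig p.1) a).
Arguments coxeter_rel {S} m u v.
Arguments ad_rel {S} m a b.
Arguments Ad_eq {S} m _ _.
Arguments W_eq {S} m _ _.
Arguments phi {S} m a.
Arguments inQ {S} m w.

(* Main.v *)
Require Import Defs.
From mathcomp Require Import all_boot.
Set Implicit Arguments. Unset Strict Implicit.

Lemma pe_inf (X : Type) (R : word X -> word X -> Prop) (l a b r : word X) :
  pres_eq R a b -> pres_eq R (l ++ a ++ r) (l ++ b ++ r).
Proof. by move=> H; apply: pe_cat (pe_refl _ _) (pe_cat H (pe_refl _ _)). Qed.
Arguments pe_inf {X R} l {a b} r _.

Lemma winv_cat (X : Type) (u v : word X) : winv (u ++ v) = winv v ++ winv u.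
Proof. by rewrite /winv map_cat rev_cat. Qed.

Lemma winv_cons (X : Type) (a : X * bool) (w : word X) :
  winv (a :: w) = winv w ++ [:: (a.1, ~~ a.2)].
Proof. by rewrite -cat1s winv_cat. Qed.

Lemma winv_winv (X : Type) (w : word X) : winv (winv w) = w.
Proof. by elim: w => [|[a b] w IH] //=; rewrite winv_cons winv_cat IH /= negbK. Qed.

Lemma w_winv (X : Type) (R : word X -> word X -> Prop) (w : word X) :
  pres_eq R (w ++ winv w) [::].
Proof.
elim: w => [|[a b] w IH]; first exact: pe_refl.
rewrite winv_cons /=.
apply: pe_trans (pe_cancel R a b).
have := pe_inf [:: (a, b)] [:: (a, ~~ b)] IH.
by rewrite /= -catA.
Qed.

Lemma winv_w (X : Type) (R : word X -> word X -> Prop) (w : word X) :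
  pres_eq R (winv w ++ w) [::].
Proof. by have := w_winv R (winv w); rewrite winv_winv. Qed.

Section W.
Lemma W_ss (S : Type) (m : S -> S -> option nat) (hm : is_coxeter_matrix m) (s : S) :
  W_eq m [:: (s, false); (s, false)] [::].
Proof. apply: pe_rel; exists s, s, 1; split; first exact: hm.1. by []. Qed.

Lemma W_letter (S : Type) (m : S -> S -> option nat) (hm : is_coxeter_matrix m) (s : S) c :
  W_eq m [:: (s, c)] [:: (s, false)].
Proof.
case: c; last exact: pe_refl.
apply: pe_trans (_ : W_eq m ([:: (s, true)] ++ [:: (s, false); (s, false)] ++ [::]) _).
  exact: pe_sym (pe_inf [:: (s, true)] [::] (W_ss hm s)).
exact: (pe_inf [::] [:: (s, false)] (pe_cancel _ s true)).
Qed.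

Lemma winv_W (S : Type) (m : S -> S -> option nat) (a b : word S) :
  W_eq m a b -> W_eq m (winv a) (winv b).
Proof.
move=> H.
apply: pe_trans (_ : W_eq m (winv a ++ b ++ winv b) _).
  have := pe_inf (winv a) [::] (pe_sym (w_winv (coxeter_rel m) b)).
  by rewrite /= !cats0.
apply: pe_trans (_ : W_eq m (winv a ++ a ++ winv b) _).
  exact: pe_inf (pe_sym H).
have := pe_inf [::] (winv b) (winv_w (coxeter_rel m) a).
by rewrite /= -catA; apply.
Qed.

Lemma inQ_W (S : Type) (m : S -> S -> option nat) (a b : word S) :
  W_eq m a b -> inQ m b -> inQ m a.
Proof. by move=> H [t [u Hu]]; exists t, u; apply: pe_trans H Hu. Qed.

Lemma inQ_conj (S : Type) (m : S -> S -> option nat) (x w : word S) :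
  inQ m x -> inQ m (winv w ++ x ++ w).
Proof.
move=> [t [u H]]; exists t, (u ++ w).
have := pe_inf (winv w) w H.
by rewrite winv_cat -!catA.
Qed.

Lemma inQ_self_inv (S : Type) (m : S -> S -> option nat) (hm : is_coxeter_matrix m) (x : word S) :
  inQ m x -> W_eq m x (winv x).
Proof.
move=> [t [u H]].
eapply pe_trans; first exact H.
apply: pe_trans (pe_sym (winv_W H)).
rewrite !winv_cat winv_winv -catA.
exact: pe_inf (pe_sym (W_letter hm t true)).
Qed.

Lemma inQ_xx (S : Type) (m : S -> S -> option nat) (hm : is_coxeter_matrix m) (x : word S) :
  inQ m x -> W_eq m (x ++ x) [::].
Proof.
move=> H.
apply: pe_trans (winv_w (coxeter_rel m) x).
exact: pe_cat (inQ_self_inv hm H) (pe_refl _ _).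
Qed.

Lemma Ad_comm (S : Type) (m : S -> S -> option nat) (hm : is_coxeter_matrix m) (x q : QW m) :
  Ad_eq m [:: (x, false); (x, false); (q, false)] [:: (q, false); (x, false); (x, false)].
Proof.
have Hp : inQ m (proj1_sig x ++ proj1_sig q ++ proj1_sig x).
  apply: (inQ_W (b := winv (proj1_sig x) ++ proj1_sig q ++ proj1_sig x)).
    exact: pe_cat (inQ_self_inv hm (proj2_sig x)) (pe_refl _ _).
  exact: inQ_conj (proj2_sig q).
pose p : QW m := exist _ _ Hp.
have H1 : Ad_eq m [:: (x, true); (q, false); (x, false)] [:: (p, false)].
  apply: pe_rel; right; exists q, x, p; split => //; exact: pe_refl.
have H2 : Ad_eq m [:: (x, true); (p, false); (x, false)] [:: (q, false)].
  apply: pe_rel; right; exists p, x, q; split => //=.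
  have Hxx := inQ_xx hm (proj2_sig x).
  have := pe_sym (pe_cat Hxx (pe_cat (pe_refl (coxeter_rel m) (proj1_sig q)) Hxx)).
  by rewrite /= cats0 -!catA.
have H3 : Ad_eq m [:: (x, true); (x, true); (q, false); (x, false); (x, false)] [:: (q, false)].
  exact: pe_trans (pe_inf [:: (x, true)] [:: (x, false)] H1) H2.
apply: pe_trans (_ : Ad_eq m ([:: (x, false); (x, false)] ++
   [:: (x, true); (x, true); (q, false); (x, false); (x, false)] ++ [::]) _).
  exact: pe_sym (pe_inf [:: (x, false); (x, false)] [::] H3).
apply: pe_trans (_ : Ad_eq m ([:: (x, false)] ++ [::] ++
   [:: (x, true); (q, false); (x, false); (x, false)]) _).
  exact: (pe_inf [:: (x, false)] [:: (x, true); (q, false); (x, false); (x, false)] (pe_cancel _ x false)).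
exact: (pe_inf [::] [:: (q, false); (x, false); (x, false)] (pe_cancel _ x false)).
Qed.

Lemma key (S : Type) (m : S -> S -> option nat) (hm : is_coxeter_matrix m) (x : QW m) w :
  forall y : QW m, W_eq m (proj1_sig y) (winv w ++ proj1_sig x ++ w) ->
  Ad_eq m (gen x ++ gen x) (gen y ++ gen y).
Proof.
elim/last_ind: w => [|w [s b] IH] y Hy.
  have Hr : Ad_eq m (gen x) (gen y).
    apply: pe_rel; left; exists x, y; split => //.
    by apply: pe_sym; move: Hy; rewrite /= cats0.
  by apply: pe_cat; exact Hr.
pose z : QW m := exist _ _ (inQ_conj w (proj2_sig x)).
have Hz := IH z (pe_refl _ _).
have Hs : inQ m (gen s) by exists s, [::]; exact: pe_refl.
pose qs : QW m := exist _ _ Hs.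
have Hyz : W_eq m (proj1_sig y) (gen s ++ proj1_sig z ++ gen s).
  apply: pe_trans Hy _.
  rewrite -cats1 winv_cat /= -!catA /=.
  apply: pe_cat (W_letter hm s _) _.
  have := pe_inf (winv w ++ sval x ++ w) [::] (W_letter hm s b); by rewrite !cats0 -!catA.
have Hr : Ad_eq m [:: (qs, true); (z, false); (qs, false)] (gen y).
  by apply: pe_rel; right; exists z, qs, y; split.
apply: pe_trans Hz _.
apply: pe_sym.
apply: pe_trans (_ : Ad_eq m ([:: (qs, true); (z, false); (qs, false)] ++
   [:: (qs, true); (z, false); (qs, false)]) _).
  apply pe_sym; apply pe_cat; exact Hr.
apply: pe_trans (_ : Ad_eq m ([:: (qs, true); (z, false)] ++ [::] ++
   [:: (z, false); (qs, false)]) _).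
  exact: (pe_inf [:: (qs, true); (z, false)] [:: (z, false); (qs, false)] (pe_cancel _ qs false)).
apply: pe_trans (_ : Ad_eq m ([:: (qs, true)] ++ [:: (qs, false); (z, false); (z, false)] ++ [::]) _).
  exact: (pe_inf [:: (qs, true)] [::] (Ad_comm hm z qs)).
exact: (pe_inf [::] [:: (z, false); (z, false)] (pe_cancel _ qs true)).
Qed.
End W.

Theorem lemma2p6 (S : finType) (m : S -> S -> option nat)
  (hm : is_coxeter_matrix m) (x y : QW m) :
  (exists w : word S, W_eq m (proj1_sig y) (winv w ++ proj1_sig x ++ w)) ->
  Ad_eq m (gen x ++ gen x) (gen y ++ gen y) /\
  W_eq m (phi m (gen x ++ gen x)) [::].
Proof.
move=> [w Hw]; split; first exact: (@key S m hm x w y Hw).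
rewrite /phi /= cats0; exact: (@inQ_xx S m hm (sval x) (proj2_sig x)).
Qed.
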